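(* For every $n\geq 4$, \[\widehat{\mathsf{g}}(K_n^3)\geq \left\lceil\frac{(n-2)(n+3)(n-4)}{12}\right\rceil.\]
   Context: $K_n^3$ is the complete $3$-uniform hypergraph on vertex set $[n]$ (edges: all $3$-element subsets). Its Levi graph $L_n$ is the bipartite graph with vertex set $[n]\sqcup\binom{[n]}{3}$, $i$ adjacent to triple $t$ iff $i\in t$. The Euler genus of a graph $G$ is $\widehat{\mathsf{g}}(G)=\min\{2\mathsf{g}(G),\widetilde{\mathsf{g}}(G)\}$ where $\mathsf{g}$ is the orientable genus and $\widetilde{\mathsf{g}}$ the non-orientable genus (0 for planar graphs); $\widehat{\mathsf{g}}(K_n^3):=\widehat{\mathsf{g}}(L_n)$. *)

(* Defs.v *)
From HB Require Import structures.
From mathcomp Require Import all_boot all_order all_algebra all_fingroup.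
Set Implicit Arguments. Unset Strict Implicit. Unset Printing Implicit Defensive.
Import Order.TTheory GRing.Theory Num.Theory.

(* The Levi graph L_n of the complete 3-uniform hypergraph K_n^3.           *)
(* Edges: incident pairs (i, t) with i \in t.  L_n is simple and bipartite, *)
(* so edges are identified with such incident pairs.                        *)

Notation triple n := {t : {set 'I_n} | #|t| == 3}.

Notation LVert n := ('I_n + triple n)%type.

Notation LEdge n := {p : 'I_n * triple n | p.1 \in val p.2}.

Definition ept n (e : LEdge n) : 'I_n := (val e).1.
Definition etr n (e : LEdge n) : triple n := (val e).2.

(* Combinatorial embedding schemes (rotation system + edge signature), see  *)
(* Mohar--Thomassen, "Graphs on Surfaces", Sec. 3.3 / 4.1.                  *)
(* The rotation at a point-vertex i is encoded by the restriction of a      *)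
(* permutation rp of the edges to the edges at i, which must be a single    *)
(* cycle; likewise rt for triple-vertices.  sg e = true means e is twisted. *)

Record scheme (n : nat) := Scheme {
  rot_pt : {perm LEdge n};
  rot_tr : {perm LEdge n};
  sgn    : {ffun LEdge n -> bool} }.

Definition valid_scheme n (S : scheme n) : Prop :=
  (forall e, ept (rot_pt S e) = ept e) /\
  (forall e f, ept e = ept f -> fconnect (rot_pt S) e f) /\
  (forall e, etr (rot_tr S e) = etr e) /\
  (forall e f, etr e = etr f -> fconnect (rot_tr S) e f).

(* Flags: (edge, end, side); end = false is the point end, true the triple  *)
(* end; side says whether the flag lies in the angle between e and its      *)
(* successor (true) or its predecessor (false) in the rotation at that end. *)
Notation flag n := (LEdge n * bool * bool)%type.

Definition rot_at n (S : scheme n) (b : bool) : {perm LEdge n} :=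
  if b then rot_tr S else rot_pt S.

(* move to the other end of the edge (keeping the same physical side,      *)
(* which swaps the local side label unless the edge is twisted)            *)
Definition tau0 n (S : scheme n) (x : flag n) : flag n :=
  let: (e, b, s) := x in (e, ~~ b, if sgn S e then s else ~~ s).

(* move across the angle at the current vertex to the neighbouring edge *)
Definition tau1 n (S : scheme n) (x : flag n) : flag n :=
  let: (e, b, s) := x in
  if s then (rot_at S b e, b, false) else ((rot_at S b)^-1%g e, b, true).

Definition face_rel n (S : scheme n) : rel (flag n) :=
  fun x y => (y == tau0 S x) || (y == tau1 S x).

(* number of faces = number of orbits of <tau0, tau1> on flags *)
Definition num_faces n (S : scheme n) : nat := n_comp (face_rel S) predT.

(* Euler genus of the surface determined by the scheme (L_n is connected): *)
Definition scheme_euler_genus n (S : scheme n) : int :=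
  (2%:Z - (#|{: LVert n}|)%:Z + (#|{: LEdge n}|)%:Z - (num_faces S)%:Z)%R.

(* Euler genus of L_n (= of K_n^3) is at least k iff every embedding scheme *)
(* yields Euler genus at least k (the Euler genus is the minimum over all   *)
(* embedding schemes).                                                      *)
Definition euler_genus_Kn3_ge (n : nat) (k : int) : Prop :=
  forall S : scheme n, valid_scheme S -> (k <= scheme_euler_genus S)%R.

(* Main.v *)
Require Import Defs.
From HB Require Import structures.
From mathcomp Require Import all_boot all_order all_algebra all_fingroup.
From mathcomp Require Import zify.
Set Implicit Arguments. Unset Strict Implicit. Unset Printing Implicit Defensive.

Definition se n (b : bool) (e f : LEdge n) : bool :=
  if b then etr e == etr f else ept e == ept f.

Lemma se_sym n b (e f : LEdge n) : se b e f = se b f e.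
Proof. by case: b; rewrite /se eq_sym. Qed.

Lemma se_trans n b (e f g : LEdge n) : se b e f -> se b f g -> se b e g.
Proof. by case: b; rewrite /se => /eqP-> /eqP->. Qed.

Lemma se_both n b (e f : LEdge n) : se b e f -> se (~~ b) e f -> e = f.
Proof.
have H : se false e f -> se true e f -> e = f.
  rewrite /se /ept /etr => /eqP h1 /eqP h2; apply: val_inj.
  by move: h1 h2; case: (val e) => ??; case: (val f) => ?? /= -> ->.
by case: b => /= h1 h2; [apply: H h2 h1 | apply: H h1 h2].
Qed.

Lemma rot_se n (S : scheme n) b e : valid_scheme S -> se b (rot_at S b e) e.
Proof. by case=> [h1 [_ [h3 _]]]; case: b; rewrite /se /= ?h1 ?h3. Qed.

Lemma rot_fc n (S : scheme n) b e f : valid_scheme S -> se b e f ->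
  fconnect (rot_at S b) e f.
Proof. by case=> [_ [h2 [_ h4]]]; case: b; rewrite /se /= => /eqP; [apply: h4|apply: h2]. Qed.

Lemma other_edge n (hn : 4 <= n) b (e : LEdge n) : exists f, se b f e && (f != e).
Proof.
case: e => [[i t] hit] /=.
have ht3 : #|val t| = 3 by apply/eqP; case: t {hit} => ? /=.
have : 0 < #|val t :\ i| by move: ht3; rewrite (cardsD1 i) hit /= add1n => -[->].
case/card_gt0P => [a]; rewrite !inE => /andP [nai hat].
case: b.
  exists (exist _ (a, t) hat); rewrite /se /etr /= eqxx /=.
  apply/eqP => h; have := congr1 (fun e : LEdge n => (val e).1) h; rewrite /= => /eqP; by rewrite (negPf nai).
have : 0 < #|~: val t| by move: (cardsC (val t)); rewrite card_ord ht3; lia.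
move=> /card_gt0P [c]; rewrite !inE => hct.
have nic : i != c by apply: contraNneq hct => <-.
have nac : a != c by apply: contraNneq hct => <-.
have h3 : #|[set i; a; c]| == 3.
  by rewrite -setUA cardsU1 cards2 !inE nac negb_or nic (eq_sym i a) nai.
have hi : i \in [set i; a; c] by rewrite !inE eqxx.
exists (exist _ (i, exist _ [set i; a; c] h3) hi); rewrite /se /ept /= eqxx /=.
apply/eqP => h; have := congr1 (fun e : LEdge n => val (val e).2) h; rewrite /= => ht.
by move: hct; rewrite /= -ht !inE eqxx !orbT.
Qed.

Lemma rot_nofix n (hn : 4 <= n) (S : scheme n) b e : valid_scheme S -> rot_at S b e != e.
Proof.
move=> vS; apply/eqP => hfix.
have [f /andP [sf nf]] := other_edge hn b e.
have hc : fconnect (rot_at S b) e f by apply: (rot_fc vS); rewrite se_sym.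
have := iter_findex hc; rewrite iter_fix // => ef.
by move: nf; rewrite ef eqxx.
Qed.

Lemma rotV_nofix n (hn : 4 <= n) (S : scheme n) b e : valid_scheme S ->
  ((rot_at S b)^-1)%g e != e.
Proof.
move=> vS; apply/eqP => h.
have := rot_nofix hn b e vS; rewrite -{1}h permKV eqxx //.
Qed.

Lemma rotV_se n (S : scheme n) b e : valid_scheme S -> se b (((rot_at S b)^-1)%g e) e.
Proof.
move=> vS; have := rot_se b (((rot_at S b)^-1)%g e) vS.
by rewrite permKV se_sym.
Qed.

Lemma tau1_spec n (hn : 4 <= n) (S : scheme n) e b s : valid_scheme S ->
  exists f s', [/\ tau1 S (e, b, s) = (f, b, s'), se b f e & f != e].
Proof.
move=> vS; case: s => /=.
  by exists (rot_at S b e), false; split => //; [apply: rot_se | apply: rot_nofix].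
by exists (((rot_at S b)^-1)%g e), true; split => //; [apply: rotV_se | apply: rotV_nofix].
Qed.

Lemma tau0K n (S : scheme n) : involutive (tau0 S).
Proof. by case=> [[e b] s] /=; rewrite negbK; case: (sgn S e); rewrite ?negbK. Qed.

Lemma tau1K n (S : scheme n) : involutive (tau1 S).
Proof. by case=> [[e b] s]; case: s => /=; rewrite ?permK ?permKV. Qed.

Lemma face_sym n (S : scheme n) : connect_sym (face_rel S).
Proof.
apply: sym_connect_sym => x y; rewrite /face_rel.
apply/idP/idP => /orP [] /eqP ->; by rewrite ?tau0K ?tau1K eqxx ?orbT.
Qed.

Lemma all_consE (T : Type) (a : pred T) x s : all a (x :: s) = a x && all a s.
Proof. by []. Qed.

Lemma card_ge_all (T : finType) (P : pred T) (l : seq T) :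
  uniq l -> all P l -> size l <= #|P|.
Proof.
move=> ul al; rewrite -(card_uniqP ul); apply: subset_leq_card.
by apply/subsetP => y hy; exact: (allP al y hy).
Qed.

Lemma uniq4 (T : eqType) (a b c d : T) : a != b -> a != c -> a != d ->
  b != c -> b != d -> c != d -> uniq [:: a; b; c; d].
Proof. by move=> ab ac ad bc bd cd; rewrite /= !inE !negb_or ab ac ad bc bd cd. Qed.

Lemma comp8 n (hn : 4 <= n) (S : scheme n) x : valid_scheme S ->
  8 <= #|connect (face_rel S) x|.
Proof.
move=> vS; case: x => [[e b] s].
set R := face_rel S.
have R0 : forall y, R y (tau0 S y) by move=> y; rewrite /R /face_rel eqxx.
have R1 : forall y, R y (tau1 S y) by move=> y; rewrite /R /face_rel eqxx orbT.
have t0 : forall f c u, exists u', tau0 S (f, c, u) = (f, ~~ c, u') by move=> f c u; eexists.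
have [s1 E1] := t0 e b s.
have [e2 [s2 [E2 se2 ne2]]] := tau1_spec hn e (~~ b) s1 vS.
have [s3 E3] := t0 e2 (~~ b) s2; rewrite negbK in E3.
have [e1 [s4 [E4 se1 ne1]]] := tau1_spec hn e b s vS.
have [s5 E5] := t0 e1 b s4.
have [e3 [s6 [E6 se3 ne3]]] := tau1_spec hn e1 (~~ b) s5 vS.
have [s7 E7] := t0 e3 (~~ b) s6; rewrite negbK in E7.
set x := (e, b, s).
have c1 : connect R x (e, ~~ b, s1) by apply: connect1; rewrite -E1.
have c2 : connect R x (e2, ~~ b, s2) by apply: connect_trans c1 _; apply: connect1; rewrite -E2.
have c3 : connect R x (e2, b, s3) by apply: connect_trans c2 _; apply: connect1; rewrite -E3.
have c4 : connect R x (e1, b, s4) by apply: connect1; rewrite -E4.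
have c5 : connect R x (e1, ~~ b, s5) by apply: connect_trans c4 _; apply: connect1; rewrite -E5.
have c6 : connect R x (e3, ~~ b, s6) by apply: connect_trans c5 _; apply: connect1; rewrite -E6.
have c7 : connect R x (e3, b, s7) by apply: connect_trans c6 _; apply: connect1; rewrite -E7.
have n01 : e != e1 by rewrite eq_sym.
have n02 : e != e2 by rewrite eq_sym.
have n03 : e != e3.
  apply/eqP => h; move/eqP: ne1; apply; apply: (se_both (b := b)) => //.
  by rewrite h se_sym.
have n12 : e1 != e2.
  apply/eqP => h; move/eqP: ne1; apply; apply: (se_both (b := b)) => //.
  by rewrite h.
have n13 : e1 != e3 by rewrite eq_sym.
have n23 : e2 != e3.
  apply/eqP => h; move/eqP: n01; apply; apply: (se_both (b := b)); first by rewrite se_sym.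
  by apply: (@se_trans _ _ _ e2); [rewrite se_sym | rewrite h].
pose l := [:: x; (e, ~~ b, s1); (e1, b, s4); (e1, ~~ b, s5); (e2, b, s3); (e2, ~~ b, s2);
              (e3, b, s7); (e3, ~~ b, s6)].
have ul : uniq l.
  apply: (@map_uniq _ _ (fun y : flag n => (y.1.1, y.1.2))).
  have -> : map (fun y : flag n => (y.1.1, y.1.2)) l =
     [seq (f, c) | f <- [:: e; e1; e2; e3], c <- [:: b; ~~ b]] by [].
  apply: (@allpairs_uniq _ _ _ (@pair (LEdge n) bool)).
  - exact: (uniq4 n01 n02 n03 n12 n13 n23).
  - by case: (b).
  - move=> [a1 a2] [b1 b2] _ _; exact: id.

have hall : all (connect R x) l.
  rewrite /l !all_consE.
  apply/andP; split; first exact: connect0.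
  apply/andP; split; first exact: c1.
  apply/andP; split; first exact: c4.
  apply/andP; split; first exact: c5.
  apply/andP; split; first exact: c3.
  apply/andP; split; first exact: c2.
  apply/andP; split; first exact: c7.
  apply/andP; split; first exact: c6.
  exact: erefl.
have := card_ge_all ul hall.
have -> : size l = 8 by [].
exact: id.
Qed.

Lemma ncomp_bound (T : finType) (e : rel T) (k : nat) :
  connect_sym e -> (forall x, k <= #|connect e x|) -> k * n_comp e predT <= #|T|.
Proof.
move=> sym hk.
rewrite -sum1_card (partition_big (fingraph.root e) (roots e)) /=; last by move=> i _; exact: roots_root.
rewrite /n_comp_mem -sum1_card big_distrr /= muln1.
rewrite [X in X <= _](eq_bigl (roots e)); last by move=> r; rewrite !inE andbT.
apply: leq_sum => r rr.
apply: (leq_trans (hk r)); rewrite -sum1_card /= leq_eqVlt; apply/orP; left; apply/eqP.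
apply: eq_bigl => x. rewrite !inE.
move/eqP: rr => rr.
by rewrite -[X in _ == X]rr (fingraph.root_connect sym) sym.
Qed.

Lemma card_triple n : #|{: triple n}| = 'C(n, 3).
Proof.
rewrite card_sig; have := card_draws 'I_n 3; rewrite card_ord => <-.
by apply: eq_card => t; rewrite !inE.
Qed.

Lemma card_V n : #|{: LVert n}| = n + 'C(n, 3).
Proof. by rewrite card_sum card_ord card_triple. Qed.

Lemma card_E n : #|{: LEdge n}| = 3 * 'C(n, 3).
Proof.
rewrite card_sig -sum1_card big_mkcond /= -(pair_bigA _ (fun i (t : triple n) => if i \in val t then 1 else 0)) /=.
rewrite exchange_big /=.
rewrite (eq_bigr (fun _ => 3)); last first.
  move=> t _; rewrite -big_mkcond /= sum1_card; exact/eqP/(valP t).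
by rewrite sum_nat_const card_triple mulnC.
Qed.

Lemma C3 n : 'C(n, 3) * 6 = n * (n - 1) * (n - 2).
Proof.
rewrite (bin_ffact n 3) !ffactnS ffactn0 muln1; case: n => [|[|[|n]]] //=; rewrite !subn1 /=; lia.
Qed.

Theorem proposition2p2 (n : nat) (hn : 4 <= n) :
  euler_genus_Kn3_ge n ((((n - 2) * (n + 3) * (n - 4) + 11) %/ 12)%N)%:Z.
Proof.
move=> S vS.
have hF : 8 * num_faces S <= #|{: flag n}|.
  apply: ncomp_bound; [exact: face_sym | move=> x; exact: comp8].
rewrite !card_prod card_bool card_E in hF.
rewrite /scheme_euler_genus card_V card_E.
have hC := C3 n.
have hP : (n - 2) * (n + 3) * (n - 4) + 12 * (n - 2) = n * (n - 1) * (n - 2).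
  have [m ->] : exists m, n = m + 4 by exists (n - 4); lia.
  have -> : m + 4 - 2 = m + 2 by lia.
  have -> : m + 4 - 4 = m by lia.
  have -> : m + 4 - 1 = m + 3 by lia.
  nia.
move: hF hC hP.
set C := 'C(n, 3); set F := num_faces S.
set P := (n - 2) * (n + 3) * (n - 4); set Q := n * (n - 1) * (n - 2).
move=> hF hC hP.
lia.
Qed.
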